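(* Let $X$ be a topological space, $I$ a set, and $(\phi_i)_{i\in I}$, $(\psi_i)_{i\in I}$ uniformly bounded families of lower semicontinuous functions $X\to\mathbb{R}$. For $f\in X$ and $m\in\mathbb{N}$, $m\ge1$, define $\phi(f)=\sup_{i\in I}\phi_i(f)$, $\theta_m(f)=\sup_{i\in I}\big[\phi_i(f)+2^{-m}\psi_i(f)\big]$ and $\theta(f)=\sum_{m=1}^\infty2^{-m}\theta_m(f)$. If $(f_n)$ is a sequence converging to $f$ in $X$ with $\theta(f_n)\to\theta(f)$, then there is a sequence $(i_n)$ in $I$ such that $\phi_{i_n}(f)\to\phi(f)$, $\phi_{i_n}(f_n)\to\phi(f)$, $\phi(f_n)\to\phi(f)$, and $\psi_{i_n}(f_n)-\psi_{i_n}(f)\to0$ as $n\to\infty$. Moreover, if $I$ is equipped with a topology in which it is sequentially compact, then $(i_n)$ may be chosen to be convergent in that topology. *)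

(* Defs.v *)
From HB Require Import structures.
From mathcomp Require Import all_boot all_order all_algebra.
From mathcomp Require Import all_classical all_reals all_analysis.
Set Implicit Arguments. Unset Strict Implicit. Unset Printing Implicit Defensive.
Import Order.TTheory GRing.Theory Num.Theory.
Import numFieldNormedType.Exports.
Local Open Scope classical_set_scope.
Local Open Scope ring_scope.

Definition supfam (R : realType) (X I : Type) (phi : I -> X -> R) (x : X) : R :=
  sup (range (fun i => phi i x)).

Definition theta_m (R : realType) (X I : Type) (phi psi : I -> X -> R)
  (m : nat) (x : X) : R :=
  sup (range (fun i => phi i x + (2 ^- m) * psi i x)).

Definition theta (R : realType) (X I : Type) (phi psi : I -> X -> R) (x : X) : R :=
  limn (fun N => \sum_(1 <= m < N) (2 ^- m) * theta_m phi psi m x).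

Definition seq_compact (T : topologicalType) : Prop :=
  forall u : nat -> T, exists s : nat -> nat,
    (forall n, (s n < s n.+1)%N) /\ exists l : T, (u \o s) @ \oo --> l.

(* Main.v *)
Require Import Defs.
From HB Require Import structures.
From mathcomp Require Import all_boot all_order all_algebra.
From mathcomp Require Import all_classical all_reals all_analysis.
From mathcomp Require Import ring lra.
Import Order.TTheory GRing.Theory Num.Theory.
Import numFieldNormedType.Exports.
Local Open Scope classical_set_scope.
Local Open Scope ring_scope.


Lemma sup_ge_elt (R : realType) (I : Type) (g : I -> R) (B : R) i :
  (forall j, g j <= B) -> g i <= sup (range g).
Proof.
move=> hB; apply: sup_upper_bound; last by exists i.
split; first by exists (g i), i.
by exists B => _ [j _ <-]; exact: hB.
Qed.

Lemma sup_le_B (R : realType) (I : Type) (g : I -> R) (B : R) :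
  inhabited I -> (forall j, g j <= B) -> sup (range g) <= B.
Proof.
move=> [i] hB; apply: ge_sup; first by exists (g i), i.
by move=> _ [j _ <-]; exact: hB.
Qed.

Lemma sup_adh (R : realType) (I : Type) (g : I -> R) (B : R) (e : R) :
  inhabited I -> (forall j, g j <= B) -> 0 < e -> exists i, sup (range g) - e < g i.
Proof.
move=> [i] hB he.
have hs : has_sup (range g).
  split; first by exists (g i), i.
  by exists B => _ [j _ <-]; exact: hB.
have [_ [j _ <-] hj] := sup_adherent he hs.
by exists j.
Qed.


Lemma tpos (R : realType) m : 0 < (2:R)^-m.
Proof. by rewrite invr_gt0 exprn_gt0. Qed.

Lemma geo_sum (R : realType) a b : (a <= b)%N ->
  \sum_(a <= m < b) (2:R)^-m = 2 * 2^-a - 2 * 2^-b.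
Proof.
elim: b => [|b IH].
  by rewrite leqn0 => /eqP ->; rewrite big_geq // subrr.
rewrite leq_eqVlt => /orP[/eqP ->|hab]; first by rewrite big_geq // subrr.
rewrite big_nat_recr //= IH // exprS invfM.
have h2 : (2:R) != 0 by rewrite pnatr_eq0.
field; by rewrite !expf_neq0.
Qed.

Lemma geo_le (R : realType) a b : \sum_(a <= m < b) (2:R)^-m <= 2 * 2^-a.
Proof.
case: (leqP a b) => hab.
  rewrite geo_sum // lerBlDr lerDl; by apply: mulr_ge0 => //; apply/ltW/tpos.
rewrite big_geq ?(ltnW hab) //; by apply: mulr_ge0 => //; apply/ltW/tpos.
Qed.

Lemma pos_mono (R : realType) (F : nat -> R) lo a b : (forall m, 0 <= F m) -> (a <= b)%N ->
  \sum_(lo <= m < a) F m <= \sum_(lo <= m < b) F m.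
Proof.
move=> hF hab; case: (leqP lo a) => hlo.
  rewrite (big_cat_nat hlo hab) /= lerDl; exact: sumr_ge0.
rewrite big_geq ?(ltnW hlo) //; exact: sumr_ge0.
Qed.


Lemma tle1 (R : realType) m : (2:R)^-m <= 1.
Proof. rewrite invf_le1 ?exprn_gt0 //; apply: exprn_ege1; lra. Qed.

Lemma wsum (R : realType) (c : nat -> R) (B : R) : (forall m, `|c m| <= B) ->
  cvgn (fun N => \sum_(1 <= m < N) 2^-m * c m) /\
  forall N, (1 <= N)%N ->
   `|limn (fun N => \sum_(1 <= m < N) 2^-m * c m) - \sum_(1 <= m < N) 2^-m * c m| <= 2 * B * 2^-N.
Proof.
move=> hc.
have B0 : 0 <= B by apply: le_trans (hc 0%N).
set S := fun N => _.
have tail : forall N N', (1 <= N)%N -> (N <= N')%N -> `|S N' - S N| <= 2 * B * 2^-N.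
  move=> N N' h1 h2; rewrite /S (big_cat_nat h1 h2) /= addrAC subrr add0r.
  apply: (le_trans (ler_norm_sum _ _ _)).
  apply: (@le_trans _ _ (\sum_(N <= i < N') 2^-i * B)).
    apply: ler_sum => i _; rewrite normrM ger0_norm ?(ltW (tpos _ _)) //.
    by apply: (ler_wpM2l (ltW (tpos _ _))); exact: hc.
  rewrite -mulr_suml; apply: (le_trans (ler_wpM2r B0 (geo_le _ N N'))).
  by rewrite le_eqVlt; apply/orP; left; apply/eqP; ring.
have cv : cvgn S.
  set T := fun N => \sum_(1 <= m < N) 2^-m * (c m + B).
  set G := fun N => \sum_(1 <= m < N) (2:R)^-m * B.
  have -> : S = (fun N => T N - G N).
    apply: funext => N; rewrite /S /T /G -sumrB; apply: eq_bigr => i _; ring.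
  have hT0 : forall m, 0 <= 2^-m * (c m + B).
    move=> m; apply: mulr_ge0; first exact: ltW (tpos _ _).
    by have := hc m; rewrite ler_norml; lra.
  have hG0 : forall m, 0 <= (2:R)^-m * B.
    by move=> m; apply: mulr_ge0 => //; exact: ltW (tpos _ _).
  apply: is_cvgB.
    apply: nondecreasing_is_cvgn; first by move=> a b hab; exact: pos_mono.
    exists (2 * B * (2 * 2^-1)) => _ [N _ <-].
    rewrite /T (@le_trans _ _ (\sum_(1 <= m < N) 2^-m * (2 * B))) //.
      apply: ler_sum => i _; apply: (ler_wpM2l (ltW (tpos _ _))).
      by have := hc i; rewrite ler_norml; lra.
    rewrite -mulr_suml mulrC; have h2B : 0 <= 2 * B by lra.
    apply: (ler_wpM2l h2B).
    exact: geo_le.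
  apply: nondecreasing_is_cvgn; first by move=> a b hab; exact: pos_mono.
  exists (B * (2 * 2^-1)) => _ [N _ <-].
  rewrite /G -mulr_suml mulrC; apply: (ler_wpM2l B0); exact: geo_le.
split => // N h1.
have [hle hge] : limn S <= S N + 2 * B * 2^-N /\ S N - 2 * B * 2^-N <= limn S.
  split.
    apply: limr_le => //; near=> n.
    have hn : (N <= n)%N by near: n; exact: nbhs_infty_ge.
    by have := tail N n h1 hn; rewrite ler_norml; lra.
  apply: limr_ge => //; near=> n.
  have hn : (N <= n)%N by near: n; exact: nbhs_infty_ge.
  by have := tail N n h1 hn; rewrite ler_norml; lra.
move: hle hge; rewrite /S ler_norml => hle hge; lra.
Unshelve. all: by end_near.
Qed.


Lemma filter_and {T : Type} {F : set_system T} {FF : Filter F} {P Q : T -> Prop} :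
  (\forall x \near F, P x) -> (\forall x \near F, Q x) -> \forall x \near F, P x /\ Q x.
Proof. by move=> h1 h2; apply: filterS2 h1 h2 => x a b; split. Qed.

Lemma tsmall (R : realType) (d : R) : 0 < d -> \forall N \near \oo, (2:R)^-N <= d.
Proof.
move=> hd.
have hz : `|(2:R)^-1| < 1 by rewrite ger0_norm ?invr_ge0 // invf_lt1 //; lra.
move: (cvg_expr hz) => /cvgr_dist_lt /(_ d hd).
apply: filterS => N; rewrite sub0r normrN ger0_norm; last first.
  by rewrite exprn_ge0 // invr_ge0.
by rewrite exprVn => /ltW.
Qed.

Lemma near_all_lt (P : nat -> nat -> Prop) N :
  (forall k, \forall n \near \oo, P k n) -> \forall n \near \oo, forall k, (k < N)%N -> P k n.
Proof.
move=> h; elim: N => [|N IH]; first by apply: nearW => n k.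
apply: filterS2 IH (h N) => n H1 H2 k; rewrite ltnS leq_eqVlt => /orP[/eqP ->//|].
exact: H1.
Qed.

Lemma term_le (R : realType) (F : nat -> R) lo m N :
  (forall k, (lo <= k)%N -> (k < N)%N -> 0 <= F k) ->
  (lo <= m)%N -> (m < N)%N -> F m <= \sum_(lo <= k < N) F k.
Proof.
move=> hF h1 h2; rewrite (big_cat_nat h1 (ltnW h2)) /= (big_ltn h2).
rewrite addrCA lerDl addr_ge0 //.
- rewrite big_nat_cond; apply: sumr_ge0 => i /andP[/andP[hi hi2] _].
  by apply: hF => //; apply: leq_trans hi2 _; exact: ltnW.
- rewrite big_nat_cond; apply: sumr_ge0 => i /andP[/andP[hi hi2] _].
  by apply: hF => //; apply: leq_trans h1 (ltnW hi).
Qed.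

Lemma key (R : realType) (c : nat -> nat -> R) (cf : nat -> R) (B : R) :
  (forall n k, `|c n k| <= B) -> (forall k, `|cf k| <= B) ->
  (forall k e, 0 < e -> \forall n \near \oo, cf k - e <= c n k) ->
  (fun n => limn (fun N => \sum_(1 <= k < N) 2^-k * c n k)) @ \oo -->
     limn (fun N => \sum_(1 <= k < N) 2^-k * cf k) ->
  forall m e, (1 <= m)%N -> 0 < e -> \forall n \near \oo, c n m <= cf m + e.
Proof.
move=> hc hcf hlow hlim m e hm he.
set t := (2:R)^-m.
have ht : 0 < t by exact: tpos.
set d := t * e / 4.
have hd : 0 < d by rewrite /d; apply: divr_gt0 => //; exact: mulr_gt0.
have B0 : 0 <= B by apply: le_trans (hcf 0%N).
have [N [hmN hN]] : exists N, (m < N)%N /\ 8 * B * 2^-N <= t * e / 2.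
  have hB1 : 0 < 8 * B + 1 by lra.
  have hq : 0 < t * e / 2 / (8 * B + 1).
    by apply: divr_gt0 => //; apply: divr_gt0 => //; exact: mulr_gt0.
  have [N [h1 h2]] := filter_ex (filter_and (nbhs_infty_gt m) (@tsmall R _ hq)).
  exists N; split => //.
  move: h2; rewrite ler_pdivlMr // => h2.
  apply: le_trans h2; rewrite mulrDr mulr1 mulrC mulrA lerDl.
  by apply/ltW/tpos.
have h1N : (1 <= N)%N by apply: leq_trans hm (ltnW hmN).
have hev : \forall n \near \oo, (forall k, (k < N)%N -> cf k - d <= c n k) /\
    `|limn (fun N => \sum_(1 <= k < N) 2^-k * cf k) -
      limn (fun N => \sum_(1 <= k < N) 2^-k * c n k)| <= d.
  apply: filter_and; first by apply: near_all_lt => k; exact: hlow.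
  by move: hlim => /cvgrPdist_le /(_ d hd).
apply: filterS hev => n [hk hl].
have [_ wn] := @wsum R _ _ (hc n).
have [_ wf] := @wsum R _ _ hcf.
have wn' := wn N h1N; have wf' := wf N h1N.
set Sn := \sum_(1 <= k < N) 2^-k * c n k in wn'.
set Sf := \sum_(1 <= k < N) 2^-k * cf k in wf'.
set G := \sum_(1 <= k < N) (2:R)^-k.
have hG0 : 0 <= G by apply: sumr_ge0 => k _; exact/ltW/tpos.
have hG1 : G <= 1 by apply: le_trans (geo_le _ _ _) _; rewrite /= expr1 divff //.
have hsum : \sum_(1 <= k < N) 2^-k * (c n k - cf k + d) = Sn - Sf + d * G.
  rewrite /Sn /Sf /G mulr_sumr -sumrB -big_split /=; apply: eq_bigr => k _; ring.
have hterm : t * (c n m - cf m + d) <= Sn - Sf + d * G.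
  rewrite -hsum; apply: (@term_le _ (fun k => 2^-k * (c n k - cf k + d))) => //.
  move=> k _ hkN; apply: mulr_ge0; first exact/ltW/tpos.
  by have := hk k hkN; lra.
have hdG : d * G <= d by rewrite -[leRHS]mulr1; apply: ler_wpM2l => //; exact: ltW.
have htd : 0 <= t * d by apply: mulr_ge0; exact: ltW.
have hde : d = t * e / 4 by [].
move: hl wn' wf'; rewrite !ler_norml => hl wn' wf'.
have htx : t * (c n m - cf m) <= t * e.
  move: hterm; rewrite mulrDr => hterm.
  lra.
have := htx; rewrite ler_pM2l // => hx.
lra.
Qed.


Lemma t_mono (R : realType) a b : (a <= b)%N -> (2:R)^-b <= 2^-a.
Proof.
move=> hab; rewrite lef_pV2 ?posrE ?exprn_gt0 //.
by rewrite ler_eXn2l //; lra.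
Qed.

Lemma diag (P : nat -> nat -> Prop) : (forall k, \forall n \near \oo, P k n) ->
  exists ka : nat -> nat, (forall K, \forall n \near \oo, (K <= ka n)%N) /\
     \forall n \near \oo, P (ka n) n.
Proof.
move=> h.
have /choice [N hN] : forall k, exists N, forall n, (N <= n)%N -> P k n.
  by move=> k; have [N _ hN] := h k; exists N => n hn; exact: hN.
exists (fun n => \big[maxn/0%N]_(k < n.+1 | (N k <= n)%N) k); split.
  move=> K; near=> n.
  have hKn : (K < n.+1)%N by rewrite ltnS; near: n; exact: nbhs_infty_ge.
  have hNK : (N K <= n)%N by near: n; exact: nbhs_infty_ge.
  exact: (@leq_bigmax_cond _ (fun k : 'I_n.+1 => (N k <= n)%N) (fun k : 'I_n.+1 => nat_of_ord k) (Ordinal hKn) hNK).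
near=> n; apply: hN.
have hN0 : (N 0%N <= n)%N by near: n; exact: nbhs_infty_ge.
apply: (big_ind (fun x => (N x <= n)%N)) => //.
by move=> x y hx hy; rewrite /maxn; case: ifP.
Unshelve. all: by end_near.
Qed.

Lemma conv_from (R : realType) (x : nat -> R) (L C : R) (ka : nat -> nat) :
  0 < C -> (forall K, \forall n \near \oo, (K <= ka n)%N) ->
  (\forall n \near \oo, `|L - x n| <= C * 2^-(ka n)) -> x @ \oo --> L.
Proof.
move=> hC hk hx; apply/cvgrPdist_le => e he.
have hq : 0 < e / C by exact: divr_gt0.
have [K hK] := filter_ex (@tsmall R _ hq).
apply: filterS2 (hk K) hx => n hKn hn.
apply: le_trans hn _.
rewrite -ler_pdivlMl // mulrC; apply: le_trans hK; exact: t_mono.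
Qed.


Lemma lsc_ev (R : realType) (X : topologicalType) (g : X -> R) (fs : nat -> X) (f : X) :
  lower_semicontinuous (fun x => (g x)%:E) -> fs @ \oo --> f ->
  forall e, 0 < e -> \forall n \near \oo, g f - e < g (fs n).
Proof.
move=> hl hfs e he.
have [V hV hVg] := hl f (g f - e) (ltac:(rewrite lte_fin; lra)).
have hh : \forall n \near \oo, V (fs n) := hfs V hV.
apply: filterS hh => n /hVg; by rewrite lte_fin.
Qed.

Lemma sup_lsc (R : realType) (I : Type) (g : I -> nat -> R) (gf : I -> R) (B : R) :
  inhabited I -> (forall i n, g i n <= B) -> (forall i, gf i <= B) ->
  (forall i e, 0 < e -> \forall n \near \oo, gf i - e < g i n) ->
  forall e, 0 < e -> \forall n \near \oo, sup (range gf) - e <= sup (range (fun i => g i n)).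
Proof.
move=> hI hg hgf hl e he.
have he2 : 0 < e / 2 by lra.
have [i hi] := @sup_adh R I gf B (e/2) hI hgf he2.
apply: filterS (hl i _ he2) => n hn.
have := @sup_ge_elt R I (fun i => g i n) B i (fun j => hg j n).
lra.
Qed.

Lemma le_strict (s : nat -> nat) : (forall n, (s n < s n.+1)%N) -> forall k, (k <= s k)%N.
Proof.
move=> hs; elim=> [//|k IH]; exact: leq_ltn_trans IH (hs k).
Qed.


Theorem proposition1p2 (R : realType) (X : topologicalType) (I : topologicalType)
  (phi psi : I -> X -> R)
  (hI : inhabited I)
  (hbd : exists M : R, forall i x, `|phi i x| <= M /\ `|psi i x| <= M)
  (hphi : forall i, lower_semicontinuous (fun x => (phi i x)%:E))
  (hpsi : forall i, lower_semicontinuous (fun x => (psi i x)%:E))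
  (fs : nat -> X) (f : X)
  (hfs : fs @ \oo --> f)
  (hth : (fun n => theta phi psi (fs n)) @ \oo --> theta phi psi f) :
  (exists i_ : nat -> I,
      (fun n => phi (i_ n) f) @ \oo --> supfam phi f /\
      (fun n => phi (i_ n) (fs n)) @ \oo --> supfam phi f /\
      (fun n => supfam phi (fs n)) @ \oo --> supfam phi f /\
      (fun n => psi (i_ n) (fs n) - psi (i_ n) f) @ \oo --> (0 : R)) /\
  (seq_compact I ->
   exists i_ : nat -> I,
      (fun n => phi (i_ n) f) @ \oo --> supfam phi f /\
      (fun n => phi (i_ n) (fs n)) @ \oo --> supfam phi f /\
      (fun n => supfam phi (fs n)) @ \oo --> supfam phi f /\
      (fun n => psi (i_ n) (fs n) - psi (i_ n) f) @ \oo --> (0 : R) /\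
      exists l : I, i_ @ \oo --> l).
Proof.
have [M hM] := hbd.
have [i0] := hI.
have M0 : 0 <= M by have [h _] := hM i0 f; apply: le_trans h.
have hel : forall m i x, `|phi i x + 2^-m * psi i x| <= 2 * M.
  move=> m i x; have [h1 h2] := hM i x.
  have ht := @tle1 R m; have ht0 := @tpos R m.
  have h3 : `|2^-m * psi i x| <= M.
    rewrite normrM ger0_norm; last exact: ltW.
    by apply: le_trans (ler_wpM2r (normr_ge0 _) ht) _; rewrite mul1r.
  by apply: le_trans (ler_normD _ _) _; lra.
have helU : forall m i x, phi i x + 2^-m * psi i x <= 2 * M.
  by move=> m i x; have := hel m i x; rewrite ler_norml => /andP[].
have hphU : forall i x, phi i x <= M.
  by move=> i x; have [+ _] := hM i x; rewrite ler_norml => /andP[].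
have hthb : forall m x, `|theta_m phi psi m x| <= 2 * M.
  move=> m x; rewrite ler_norml; apply/andP; split.
    have := @sup_ge_elt R I (fun i => phi i x + 2^-m * psi i x) (2 * M) i0 (fun j => helU m j x).
    have := hel m i0 x; rewrite ler_norml => /andP[h1 _].
    rewrite /theta_m; lra.
  by apply: sup_le_B => // j; exact: helU.
have rel1 : forall m x, theta_m phi psi m x <= supfam phi x + 2^-m * M.
  move=> m x; apply: sup_le_B => // i.
  have := @sup_ge_elt R I (fun i => phi i x) M i (fun j => hphU j x).
  have [_ h2] := hM i x.
  have : 2^-m * psi i x <= 2^-m * M.
    by apply: (ler_wpM2l (ltW (@tpos R _))); move: h2; rewrite ler_norml => /andP[].
  rewrite /supfam; lra.
have rel2 : forall m x, supfam phi x <= theta_m phi psi m x + 2^-m * M.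
  move=> m x; apply: sup_le_B => // i.
  have := @sup_ge_elt R I (fun i => phi i x + 2^-m * psi i x) (2 * M) i (fun j => helU m j x).
  have [_ h2] := hM i x.
  have : - (2^-m * psi i x) <= 2^-m * M.
    rewrite -mulrN; apply: (ler_wpM2l (ltW (@tpos R _))).
    by move: h2; rewrite ler_norml => /andP[]; rewrite lerNl.
  rewrite /theta_m; lra.
have lp : forall i e, 0 < e -> \forall n \near \oo, phi i f - e < phi i (fs n).
  by move=> i; exact: lsc_ev (hphi i) hfs.
have lq : forall i e, 0 < e -> \forall n \near \oo, psi i f - e < psi i (fs n).
  by move=> i; exact: lsc_ev (hpsi i) hfs.
have thlow : forall m e, 0 < e ->
    \forall n \near \oo, theta_m phi psi m f - e <= theta_m phi psi m (fs n).
  move=> m; rewrite /theta_m.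
  apply: (@sup_lsc R I (fun i n => phi i (fs n) + 2^-m * psi i (fs n))
     (fun i => phi i f + 2^-m * psi i f) (2 * M)) => //.
  move=> i e he; have he2 : 0 < e / 2 by lra.
  apply: filterS2 (lp i _ he2) (lq i _ he2) => n h1 h2.
  have ht := @tle1 R m; have ht0 := @tpos R m.
  have h3 : 2^-m * (psi i f - e / 2) <= 2^-m * psi i (fs n).
    by apply: (ler_wpM2l (ltW ht0)); exact: ltW.
  have h4 : 2^-m * (e / 2) <= e / 2.
    by rewrite -[leRHS]mul1r; apply: ler_wpM2r => //; exact: ltW.
  move: h3; rewrite mulrBr => h3; lra.
have thup : forall m e, (1 <= m)%N -> 0 < e ->
    \forall n \near \oo, theta_m phi psi m (fs n) <= theta_m phi psi m f + e.
  apply: (@key R (fun n k => theta_m phi psi k (fs n)) (fun k => theta_m phi psi k f) (2 * M)).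
  - by move=> n k; exact: hthb.
  - by move=> k; exact: hthb.
  - by move=> k e he; exact: thlow.
  - exact: hth.
have sfconv : (fun n => supfam phi (fs n)) @ \oo --> supfam phi f.
  apply/cvgrPdist_le => e he.
  have hq : 0 < e / 4 / (M + 1) by apply: divr_gt0; lra.
  have [m [hm1 hm2]] := filter_ex (filter_and (nbhs_infty_gt 0) (@tsmall R _ hq)).
  move: hm2; rewrite ler_pdivlMr; last by lra.
  move=> hm2.
  have he4 : 0 < e / 4 by lra.
  have low : \forall n \near \oo, supfam phi f - e / 4 <= supfam phi (fs n).
    apply: (@sup_lsc R I (fun i n => phi i (fs n)) (fun i => phi i f) M) => //.
  have up := thup m _ hm1 he4.
  near=> n.
  have h1 : supfam phi f - e / 4 <= supfam phi (fs n) by near: n; exact: low.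
  have h2 : theta_m phi psi m (fs n) <= theta_m phi psi m f + e / 4 by near: n; exact: up.
  have := rel2 m (fs n); have := rel1 m f.
  have ht0 := @tpos R m.
  rewrite ler_norml; move=> r1 r2; apply/andP; split; lra.
have build : forall (j : nat -> I) (lv : nat -> nat), (forall k, (k < lv k)%N) ->
   (forall k, theta_m phi psi (lv k) f - 2^-(lv k) * 2^-k <
              phi (j k) f + 2^-(lv k) * psi (j k) f) ->
   exists ka : nat -> nat, (forall K, \forall n \near \oo, (K <= ka n)%N) /\
     (fun n => phi (j (ka n)) f) @ \oo --> supfam phi f /\
     (fun n => phi (j (ka n)) (fs n)) @ \oo --> supfam phi f /\
     (fun n => psi (j (ka n)) (fs n) - psi (j (ka n)) f) @ \oo --> (0 : R).
  move=> j lv hlv hj.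
  pose P k n := phi (j k) f - 2^-(lv k) * 2^-k <= phi (j k) (fs n) /\
     psi (j k) f - 2^-(lv k) * 2^-k <= psi (j k) (fs n) /\
     theta_m phi psi (lv k) (fs n) <= theta_m phi psi (lv k) f + 2^-(lv k) * 2^-k.
  have hP : forall k, \forall n \near \oo, P k n.
    move=> k; have he : 0 < 2^-(lv k) * 2^-k := mulr_gt0 (@tpos R _) (@tpos R _).
    have h1N : (1 <= lv k)%N := leq_ltn_trans (leq0n k) (hlv k).
    have A := lp (j k) _ he; have B := lq (j k) _ he; have C := thup _ _ h1N he.
    near=> n; rewrite /P; split; [|split].
    - by apply: ltW; near: n; exact: A.
    - by apply: ltW; near: n; exact: B.
    - by near: n; exact: C.
  have [ka [hka hev]] := @diag P hP.
  exists ka; split => //.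
  have hC : 0 < 2 * M + 3 by lra.
  have bnd : \forall n \near \oo,
     `|supfam phi f - phi (j (ka n)) f| <= (2 * M + 3) * 2^-(ka n) /\
     `|supfam phi f - phi (j (ka n)) (fs n)| <= (2 * M + 3) * 2^-(ka n) /\
     `|0 - (psi (j (ka n)) (fs n) - psi (j (ka n)) f)| <= (2 * M + 3) * 2^-(ka n).
    apply: filterS hev => n [ha [hb hc]].
    move: ha hb hc.
    set k := ka n; set i := j k; set t := (2:R)^-(lv k); set u := (2:R)^-k.
    move=> ha hb hc.
    have htu : t <= u := @t_mono R _ _ (ltnW (hlv k)).
    have ht0 : 0 < t := @tpos R _.
    have hu0 : 0 < u := @tpos R _.
    have ht1 : t <= 1 := @tle1 R _.
    have hjk := hj k; rewrite -/i -/t -/u in hjk.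
    have hsa := @sup_ge_elt R I (fun i => phi i f) M i (fun j => hphU j f).
    have hT' := @sup_ge_elt R I (fun i => phi i (fs n) + t * psi i (fs n)) (2 * M) i
        (fun j => helU _ j (fs n)).
    have r1 := rel1 (lv k) f; have r2 := rel2 (lv k) f.
    rewrite -/t in r1 r2.
    have [_ hb1] := hM i f; have [_ hb2] := hM i (fs n).
    move: hb1 hb2; rewrite !ler_norml => /andP[hb1 hb1'] /andP[hb2 hb2'].
    have m1 : t * psi i f <= t * M by apply: (ler_wpM2l (ltW ht0)).
    have m2 : - (t * M) <= t * psi i f.
      by rewrite -mulrN; apply: (ler_wpM2l (ltW ht0)).
    have m3 : t * psi i (fs n) <= t * M by apply: (ler_wpM2l (ltW ht0)).
    have m4 : - (t * M) <= t * psi i (fs n).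
      by rewrite -mulrN; apply: (ler_wpM2l (ltW ht0)).
    have m5 : t * u <= u by rewrite -[leRHS]mul1r; apply: ler_wpM2r => //; exact: ltW.
    have m6 : t * M <= u * M by apply: ler_wpM2r.
    have m7 : 0 <= t * u by apply: mulr_ge0; exact: ltW.
    rewrite /theta_m -/t in hT' hc hjk r1 r2.
    rewrite /supfam in hsa r1 r2 *.
    have hpsi3 : psi i (fs n) - psi i f <= 3 * u.
      have : t * (psi i (fs n) - psi i f) <= t * (3 * u) by rewrite mulrBr; lra.
      by rewrite ler_pM2l.
    split; [|split]; apply/andP; split; lra.
  split; first by apply: (@conv_from R _ _ _ _ hC hka); apply: filterS bnd => n [].
  split; first by apply: (@conv_from R _ _ _ _ hC hka); apply: filterS bnd => n [_ []].
  by apply: (@conv_from R _ _ _ _ hC hka); apply: filterS bnd => n [_ []].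
have hj0 : forall k, exists i, theta_m phi psi k.+1 f - 2^-(k.+1) * 2^-k <
    phi i f + 2^-(k.+1) * psi i f.
  move=> k; have he : 0 < 2^-(k.+1) * 2^-k := mulr_gt0 (@tpos R _) (@tpos R _).
  exact: (@sup_adh R I (fun i => phi i f + 2^-(k.+1) * psi i f) (2 * M) _ hI
    (fun j => helU _ j f) he).
have [j0 hj0'] := choice hj0.
split.
  have [ka [_ [c1 [c2 c3]]]] := build j0 (fun k => k.+1) (fun k => ltnSn k) hj0'.
  by exists (fun n => j0 (ka n)).
move=> hcomp.
have [s [hs [l hl]]] := hcomp j0.
have hsk := @le_strict s hs.
have hj1 : forall k, theta_m phi psi (s k).+1 f - 2^-((s k).+1) * 2^-k <
    phi (j0 (s k)) f + 2^-((s k).+1) * psi (j0 (s k)) f.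
  move=> k; apply: le_lt_trans (hj0' (s k)).
  have : 2^-((s k).+1) * 2^-(s k) <= 2^-((s k).+1) * (2:R)^-k.
    by apply: (ler_wpM2l (ltW (@tpos R _))); exact: t_mono.
  lra.
have [ka [hka [c1 [c2 c3]]]] :=
  build (j0 \o s) (fun k => (s k).+1) (fun k => (hsk k : (k < (s k).+1)%N)) hj1.
exists (fun n => j0 (s (ka n))); do 4 (split => //).
exists l.
move=> U hU; have [K _ hK] := hl U hU.
apply: filterS (hka K) => n hn; exact: hK.
Unshelve. all: by end_near.
Qed.
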